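(* Let $X$, $(S_n)$ be as in the context and assume there exists a quasi-stationary distribution $\nu$ with exponential absorption parameter $\theta_{0,S}$. Then $j_S(\nu)=0$ and $\nu\{x:\ j_S(x)>0\}=0$. If in addition Assumption (A) holds and $\nu\in \mathcal M_+(W_S)$, then $\nu(\eta_S)=1$ and $\nu=\sum_{i\in I_S}\nu(\eta_{S,i})\,\nu_{S,i}$.
   Context: Let $D$ be a measurable space, $\partial\notin D$, and $(X_n)_{n\in\mathbb Z_+}$ a Markov chain on $D\cup\{\partial\}$ for which $\partial$ is absorbing; $\tau_\partial=\inf\{n\ge0: X_n=\partial\}$; $\mathbb P_x,\mathbb E_x$ denote law and expectation given $X_0=x$, $\mathbb P_\mu=\int\mathbb P_x\mu(dx)$. Semigroup $S_nf(x)=\mathbb E_x(f(X_n)\mathbbm 1_{n<\tau_\partial})$, $\mu S_nf=\int S_nf\,d\mu$. Functions are extended by $0$ outside their domain. For measurable $W:D\to[1,\infty)$, $\mathcal M(W)$: finite signed measures with $|\mu|(W)<\infty$, norm $|\mu|(W)$; $\mathcal M_+(W)$ its nonnegative part; $L^\infty(W)$: measurable $f$ with $\|f\|_W=\sup|f|/W<\infty$. $\theta_S(\mu):=\inf\{\theta\ge0:\liminf_n\theta^{-n}\mu S_n\mathbbm 1_D=0\}$, $\theta_S(x)=\theta_S(\delta_x)$, $\theta_{0,S}=\sup_x\theta_S(x)$; $j_S(\mu):=\inf\{\ell\ge0:\liminf_n n^{-\ell}\theta_{0,S}^{-n}\mu S_n\mathbbm 1_D=0\}$ (with $\inf\emptyset=0$),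 $j_S(x)=j_S(\delta_x)$. A quasi-stationary distribution (QSD) is a probability measure $\nu$ on $D$ with $\mathbb P_\nu(X_n\in\cdot\mid n<\tau_\partial)=\nu$ for all $n$; its exponential absorption parameter is the $\theta\in(0,1]$ with $\mathbb P_\nu(n<\tau_\partial)=\theta^n$ for all $n$. Assumption (A): $\theta_{0,S}\in(0,1]$, $j_S$ integer valued, and there exist measurable $W_S:D\to[1,\infty)$, a finite or countable set $I_S$, probability measures $\nu_{S,i}\in\mathcal M(W_S)$, non-identically zero nonnegative $\eta_{S,i}\in L^\infty(W_S)$ ($i\in I_S$) with $\sum_i\eta_{S,i}\nu_{S,i}(W_S)\in L^\infty(W_S)$, and $\alpha_{S,n}\to0$, such that for all $f\in L^\infty(W_S)$, $n\ge1$, $x\in D$: $\big|\theta_{0,S}^{-n}n^{-j_S(x)}\mathbb E_x(f(X_n)\mathbbm 1_{n<\tau_\partial})-\sum_i\eta_{S,i}(x)\nu_{S,i}(f)\big|\le\alpha_{S,n}W_S(x)\|f\|_{W_S}$. Then $\eta_S:=\sum_i\eta_{S,i}$. *)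

(* Defs.v *)
From HB Require Import structures.
From mathcomp Require Import all_boot all_order all_algebra.
From mathcomp Require Import all_classical all_reals all_analysis.
Import Order.TTheory GRing.Theory Num.Theory.
Import numFieldNormedType.Exports.

Set Implicit Arguments.
Unset Strict Implicit.
Unset Printing Implicit Defensive.

Local Open Scope classical_set_scope.
Local Open Scope ring_scope.
Local Open Scope ereal_scope.

(* The state space of the chain is T = D u {cem}: the Markov chain is given
   by its (time-homogeneous) transition probability kernel P on T, and the
   cemetery point cem is absorbing. *)
Section chain.
Context (R : realType) (d : measure_display) (T : measurableType d).
Variables (P : R.-pker T ~> T) (cem : T).

Definition Dom : set T := [set x | x <> cem].

(* Spos n g x = E_x ( g(X_n) 1_{n < tau_cem} ) for g >= 0
   (n-step iteration of the transition kernel; functions are extended by 0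
   at the cemetery). *)
Fixpoint Spos (n : nat) (g : T -> \bar R) (x : T) : \bar R :=
  match n with
  | 0 => if x == cem then 0 else g x
  | m.+1 => \int[P x]_y Spos m g y
  end.

Definition Ssg (n : nat) (f : T -> R) (x : T) : \bar R :=
  Spos n (fun y => (Num.max (f y) 0%R)%:E) x
  - Spos n (fun y => (Num.max (- f y)%R 0%R)%:E) x.

Definition S1 (n : nat) (x : T) : \bar R := Spos n (fun _ => 1) x.

Definition muS1 (mu : {measure set T -> \bar R}) (n : nat) : \bar R :=
  \int[mu]_(x in Dom) S1 n x.

(* theta^{-n} * a, with the conventions 0^{-n} = +oo (n >= 1), 0 * oo = 0 *)
Definition negpow (th : R) (n : nat) (a : \bar R) : \bar R :=
  if (th ^+ n == 0)%R then (if a == 0 then 0 else +oo)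
  else a * ((th ^- n)%R)%:E.

Definition theta_seq (a : nat -> \bar R) : \bar R :=
  ereal_inf [set th%:E | th in
    [set th : R | (0 <= th)%R /\ limn_einf (fun n => negpow th n (a n)) = 0]].

Definition thetaS_mu (mu : {measure set T -> \bar R}) : \bar R :=
  theta_seq (muS1 mu).
(* theta_S(x) = theta_S(delta_x); delta_x S_n 1_D = S_n 1_D (x) *)
Definition thetaS_pt (x : T) : \bar R := theta_seq (fun n => S1 n x).
Definition theta0S : \bar R := ereal_sup (thetaS_pt @` Dom).

Definition j_seq (a : nat -> \bar R) : \bar R :=
  let th0 := fine theta0S in
  let L := [set l : R | (0 <= l)%R /\
     limn_einf (fun n => (n%:R `^ (- l))%:E * negpow th0 n (a n)) = 0] in
  if `[< L !=set0 >] then ereal_inf (EFin @` L) else 0.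

Definition jS_mu (mu : {measure set T -> \bar R}) : \bar R := j_seq (muS1 mu).
Definition jS_pt (x : T) : \bar R := j_seq (fun n => S1 n x).

(* quasi-stationary distribution: a probability measure on D with
   P_nu(n < tau) > 0 and P_nu(X_n in A | n < tau) = nu(A) *)
Definition isQSD (nu : probability T R) : Prop :=
  nu [set cem] = 0 /\
  forall (n : nat) (A : set T), measurable A -> A `<=` Dom ->
    0 < muS1 nu n /\
    \int[nu]_(x in Dom) Spos n (fun y => (\1_A y)%:E) x = nu A * muS1 nu n.

Definition exp_param (nu : probability T R) (th : R) : Prop :=
  (0 < th <= 1)%R /\ forall n : nat, muS1 nu n = (th ^+ n)%:E.

Definition inLinf (W f : T -> R) : Prop :=
  exists C : R, forall x, Dom x -> (`|f x| <= C * W x)%R.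

Definition normW (W f : T -> R) : \bar R :=
  ereal_sup [set (`|f x| / W x)%:E | x in Dom].

Definition sumI (I : countType) (a : I -> \bar R) : \bar R :=
  \esum_(i in [set: I]) maxe (a i) 0 - \esum_(i in [set: I]) maxe (- a i) 0.

Definition etaS (I : countType) (eta : I -> T -> R) (x : T) : \bar R :=
  \esum_(i in [set: I]) (eta i x)%:E.

Definition AssumptionA (W : T -> R) (I : countType)
    (nuS : I -> probability T R) (eta : I -> T -> R) (alpha : nat -> R) : Prop :=
  (0 < theta0S <= 1) /\
  (forall x, Dom x -> exists k : nat, jS_pt x = (k%:R)%:E) /\
  (measurable_fun Dom W /\ (forall x, Dom x -> (1 <= W x)%R)) /\
  (forall i, nuS i [set cem] = 0 /\ \int[nuS i]_(y in Dom) (W y)%:E < +oo) /\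
  (forall i, [/\ measurable_fun Dom (eta i),
                 (forall x, Dom x -> (0 <= eta i x)%R),
                 (exists x, Dom x /\ eta i x <> 0%R) &
                 inLinf W (eta i)]) /\
  (exists C : R, forall x, Dom x ->
      \esum_(i in [set: I]) ((eta i x)%:E * \int[nuS i]_(y in Dom) (W y)%:E)
      <= (C * W x)%:E) /\
  (alpha @ \oo --> 0%R) /\
  (forall f : T -> R, measurable_fun Dom f -> inLinf W f ->
    forall (n : nat) (x : T), (0 < n)%N -> Dom x ->
    `| ((fine theta0S ^- n) * (n%:R `^ (- fine (jS_pt x))))%:E * Ssg n f x
       - sumI (fun i => (eta i x)%:E * \int[nuS i]_(y in Dom) (f y)%:E) |
    <= (alpha n * W x)%:E * normW W f).

End chain.

(* Main.v *)
Require Import Defs.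
From HB Require Import structures.
From mathcomp Require Import all_boot all_order all_algebra.
From mathcomp Require Import all_classical all_reals all_analysis.
From mathcomp Require Import measurable_realfun lra.
Import Order.TTheory GRing.Theory Num.Theory.
Import numFieldNormedType.Exports.
Set Implicit Arguments.
Unset Strict Implicit.
Unset Printing Implicit Defensive.
Local Open Scope classical_set_scope.
Local Open Scope ring_scope.
Local Open Scope ereal_scope.

Section helpers.
Context (R : realType) (d : measure_display) (T : measurableType d)
  (P : R.-pker T ~> T) (cem : T) (hcem : measurable [set cem]).

Lemma mDom : measurable (Dom cem).
Proof. exact: measurableC hcem. Qed.

Lemma Spos_ge0 (n : nat) (g : T -> \bar R) : (forall y, 0 <= g y) -> forall x, 0 <= Spos P cem n g x.
Proof.
move=> g0; elim: n => [|n IH] x /=; first by case: ifP.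
exact: integral_ge0.
Qed.

Lemma Spos_meas (n : nat) (g : T -> \bar R) : (forall y, 0 <= g y) -> measurable_fun [set: T] g ->
  measurable_fun [set: T] (Spos P cem n g).
Proof.
move=> g0 mg; elim: n => [|n IH] /=.
  apply: measurable_fun_ifT => //.
  apply: (@measurable_fun_bool _ _ _ _ true).
  rewrite setTI (_ : _ @^-1` _ = [set cem]) //.
  apply/seteqP; split => x /=.
    by move/eqP.
  by move=> hx; rewrite hx /= eqxx.
apply: (measurable_fun_integral_kernel (l := P)).
- by move=> U mU; exact: measurable_kernel.
- exact: Spos_ge0.
- exact: IH.
Qed.

Lemma Spos0 n x : Spos P cem n (fun _ => 0) x = 0.
Proof.
elim: n x => [|n IH] x /=; first by case: ifP.
by under eq_integral do rewrite IH; rewrite integral0.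
Qed.

Lemma Spos_le1 (n : nat) (g : T -> \bar R) : (forall y, 0 <= g y <= 1) -> measurable_fun [set: T] g ->
  forall x, Spos P cem n g x <= 1.
Proof.
move=> g01 mg; elim: n => [|n IH] x /=.
  by case: ifP => _; [rewrite lee01|case/andP: (g01 x)].
have h0 : forall z, 0 <= g z by move=> z; case/andP: (g01 z).
apply: (@le_trans _ _ (\int[P x]_y (cst 1 y))).
  apply: ge0_le_integral => //.
  all: try (by move=> y _; apply: Spos_ge0).
  all: try (exact: Spos_meas).
  all: try (by move=> y _; exact: IH).
rewrite (@integral_cst _ _ _ (P x) [set: T] measurableT 1) mul1e.
by rewrite (@prob_kernel _ _ _ _ _ P x).
Qed.

End helpers.
Section p1.
Context (R : realType).

Lemma powR_cvg0n (l : R) : (0 < l)%R ->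
  (fun n : nat => (n%:R `^ (- l))%R) @ \oo --> 0%R.
Proof.
move=> l0; apply/cvgr0Pnorm_lt => e e0.
have ei : (0 < e^-1)%R by rewrite invr_gt0.
near=> n.
have n0 : (0 < n%:R :> R)%R.
  by apply: lt_trans (powR_gt0 _ ei) _; near: n; exact: nbhs_infty_gtr.
rewrite ger0_norm ?powR_ge0 // powRN -[X in (_ < X)%R](invrK e).
rewrite ltf_pV2 ?posrE ?powR_gt0 //.
have -> : (e^-1 = (e^-1 `^ l^-1) `^ l)%R.
  by rewrite -powRrM mulVf ?gt_eqF // powRr1 // ltW.
apply: gt0_ltr_powR => //; rewrite ?nnegrE ?powR_ge0 ?ltW //.
near: n; exact: nbhs_infty_gtr.
Unshelve. all: by end_near. Qed.

Lemma einf_powR0 (l : R) : (0 < l)%R ->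
  limn_einf (fun n : nat => (n%:R `^ (- l))%:E) = 0.
Proof.
move=> l0; apply: (cvg_limn_einf_sup _).1.
apply: cvg_EFin; first exact: nearW.
exact: powR_cvg0n.
Qed.

End p1.

Section p1b.
Context (R : realType) (d : measure_display) (T : measurableType d)
  (P : R.-pker T ~> T) (cem : T).

Lemma j_seq_geom (th0 : R) : (0 < th0)%R -> theta0S P cem = th0%:E ->
  j_seq P cem (fun n => (th0 ^+ n)%:E) = 0.
Proof.
move=> th0p hth; rewrite /j_seq hth /=.
set L := [set l : R | _].
have Ll : forall l : R, (0 < l)%R -> L l.
  move=> l l0; split; first exact: ltW.
  rewrite -(einf_powR0 l0); congr limn_einf; apply/funext => n.
  rewrite /negpow expf_eq0 gt_eqF // andbF.
  by rewrite -EFinM mulfV ?expf_neq0 ?gt_eqF // mulr1.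

have -> : `[< L !=set0 >] = true by apply/asboolP; exists 1%R; apply: Ll.
apply/eqP; rewrite eq_le; apply/andP; split.
  apply/lee_addgt0Pr => e e0; rewrite add0e.
  by apply: ge_ereal_inf; exists e%:E => //; exists e => //; apply: Ll.
by apply: le_ereal_inf_tmp => _ [l [l0 _] <-]; rewrite lee_fin.
Qed.

End p1b.

Section p2.
Context (R : realType) (d : measure_display) (T : measurableType d)
  (P : R.-pker T ~> T) (cem : T) (hcem : measurable [set cem])
  (nu : {measure set T -> \bar R}) (th0 : R) (th0p : (0 < th0)%R)
  (hmu : forall n, muS1 P cem nu n = (th0 ^+ n)%:E)
  (hth : theta0S P cem = th0%:E).

Let lk (k : nat) : R := (k.+1%:R)^-1.
Let fk (k n : nat) (x : T) : \bar R :=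
  (n%:R `^ (- lk k))%:E * negpow th0 n (S1 P cem n x).
Let Gk (k : nat) (x : T) : \bar R := limn_einf (fun n => fk k n x).

Let lk_gt0 k : (0 < lk k)%R.
Proof. by rewrite /lk invr_gt0 ltr0Sn. Qed.

Let fkE k n x : fk k n x = ((n%:R `^ (- lk k)) * th0 ^- n)%:E * S1 P cem n x.
Proof.
rewrite /fk /negpow expf_eq0 gt_eqF // andbF.
by rewrite EFinM -muleA [X in _ * X]muleC.
Qed.

Let S1_ge0 n x : 0 <= S1 P cem n x.
Proof. exact: Spos_ge0. Qed.

Let S1_meas n : measurable_fun [set: T] (S1 P cem n).
Proof. by apply: Spos_meas => //; exact: measurable_cst. Qed.

Let fk_ge0 k n x : 0 <= fk k n x.
Proof.
by rewrite fkE mule_ge0 // lee_fin mulr_ge0 ?powR_ge0 // invr_ge0 exprn_ge0 // ltW.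
Qed.

Let fk_meas k n : measurable_fun [set: T] (fk k n).
Proof.
rewrite (_ : fk k n = fun x => ((n%:R `^ (- lk k)) * th0 ^- n)%:E * S1 P cem n x); last first.
  by apply/funext => x; rewrite fkE.
exact: measurable_funeM.
Qed.

Let Gk_meas k : measurable_fun [set: T] (Gk k).
Proof.
rewrite (_ : Gk k = fun x => - limn_esup (fun n => - fk k n x)); last first.
  apply/funext => x; rewrite /Gk.
  have := limn_esupN (fun n => fk k n x); rewrite /comp => ->.
  by rewrite oppeK.
apply: measurableT_comp => //.
apply: (measurable_fun_limn_esup (f := fun n x => - fk k n x)) => n.
exact: measurableT_comp.
Qed.

Let Gk_ge0 k x : 0 <= Gk k x.
Proof.
rewrite /Gk limn_einf_lim; apply: lime_ge; first exact: is_cvg_einfs.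
apply: nearW => n; apply: le_ereal_inf_tmp => _ [m _ <-]; exact: fk_ge0.
Qed.

Let intGk k : \int[nu]_(x in Dom cem) Gk k x = 0.
Proof.
have mD := mDom hcem.
apply/eqP; rewrite eq_le integral_ge0 ?andbT; last by move=> x _; exact: Gk_ge0.
have mf : forall n, measurable_fun (Dom cem) (fk k n).
  by move=> n; exact: measurable_funS (fk_meas k n).
have f0 : forall n x, Dom cem x -> 0 <= fk k n x by move=> n x _; exact: fk_ge0.
apply: (le_trans (fatou nu mD mf f0)).
rewrite -(einf_powR0 (lk_gt0 k)) le_eqVlt; apply/orP; left; apply/eqP; congr limn_einf.
apply/funext => n; under eq_integral do rewrite fkE.
rewrite ge0_integralZl_EFin //.
all: try exact: measurable_funS (S1_meas n).
all: try (by rewrite mulr_ge0 ?powR_ge0 // invr_ge0 exprn_ge0 // ltW).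
all: try (by move=> x _; exact: S1_ge0).
rewrite -/(muS1 P cem nu n) hmu -EFinM -mulrA mulVf ?mulr1 //.
by rewrite expf_neq0 // gt_eqF.
Qed.

Lemma part2 : nu.-negligible [set x | Dom cem x /\ 0 < jS_pt P cem x].
Proof.
have mD := mDom hcem.
have ngk k : nu.-negligible (~` [set x | Dom cem x -> Gk k x = 0]).
  have : ae_eq nu (Dom cem) (Gk k) (cst 0).
    apply/(ae_eq_integral_abs nu mD).
      exact: measurable_funS (Gk_meas k).
    rewrite -(intGk k); apply: eq_integral => x _; rewrite gee0_abs //.
  by [].
apply: negligibleS (negligible_bigcup ngk).
move=> x [Dx]; rewrite /jS_pt /j_seq hth /=.
case: asboolP => [_|]; last by rewrite ltxx.
set L := [set l : R | _] => infp.
have [k hk] : exists k, (lk k)%:E < ereal_inf [set y%:E | y in L].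
  move: infp; case: (ereal_inf _) => [r||] //.
    rewrite lte_fin => r0.
    have := near_infty_natSinv_lt (PosNum r0); case=> N _ HN.
    by exists N; rewrite lte_fin; apply: (HN N) => /=.
  by move=> _; exists 0%N; rewrite ltry.
exists k => // /= hG; move: hk; apply/negP; rewrite -leNgt.
apply: ge_ereal_inf; exists (lk k)%:E => //; exists (lk k) => //.
split; first exact: ltW.
exact: (hG Dx).
Qed.

End p2.
Section esumint.
Context (R : realType).

Lemma esum_pickle (I : countType) (b : I -> \bar R) : (forall i, 0 <= b i) ->
  \esum_(i in [set: I]) b i = \sum_(n <oo) oapp b 0 (@pickle_inv I n).
Proof.
move=> b0.
set b' := fun n => oapp b 0 (@pickle_inv I n).
have -> : \esum_(i in [set: I]) b i = \esum_(i in [set: I]) b' (pickle i).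
  by apply: eq_esum => i _; rewrite /b' pickleK_inv.
rewrite -(esum_image [set: I] pickle b'); last first.
  by move=> x y _ _; exact: (pcan_inj (@pickleK_inv I)).
have b'0 : forall n, 0 <= b' n by move=> n; rewrite /b'; case: pickle_inv.
rewrite (_ : pickle @` [set: I] = [set n | (@pickle_inv I n != None)]); last first.
  apply/seteqP; split => n /=.
    by case=> i _ <-; rewrite pickleK_inv.
  case E: (pickle_inv n) => [i|] // _; exists i => //.
  by have := @pickle_invK I n; rewrite E /=.
rewrite -nneseries_esum; last by move=> n _; exact: b'0.
rewrite eseries_mkcond; apply: eq_eseriesr => n _.
by case E: (pickle_inv n) => [i|] //=; rewrite /b' E.
Qed.

Lemma integral_esum d (T : measurableType d) (mu : {measure set T -> \bar R})
  (D : set T) (mD : measurable D) (I : countType) (h : I -> T -> \bar R) :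
  (forall i, measurable_fun D (h i)) -> (forall i x, D x -> 0 <= h i x) ->
  \int[mu]_(x in D) (\esum_(i in [set: I]) h i x) =
  \esum_(i in [set: I]) \int[mu]_(x in D) h i x.
Proof.
move=> mh h0.
rewrite esum_pickle; last by move=> i; apply: integral_ge0 => x Dx; exact: h0.
under eq_integral => x xD.
  rewrite esum_pickle; last by move=> i; apply: h0; rewrite inE in xD.
  over.
rewrite /= integral_nneseries //.
- apply: eq_eseriesr => n _; case: pickle_inv => [i|] //=.
  exact: integral0.
- by move=> n; case: pickle_inv => [i|] //=; exact: measurable_cst.
- by move=> n x Dx; case: pickle_inv => [i|] //=; exact: h0.
Qed.

Lemma esum_meas d (T : measurableType d) (D : set T) (mD : measurable D)
  (I : countType) (h : I -> T -> \bar R) :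
  (forall i, measurable_fun D (h i)) -> (forall i x, D x -> 0 <= h i x) ->
  measurable_fun D (fun x => \esum_(i in [set: I]) h i x).
Proof.
move=> mh h0.
have ms : measurable_fun D (fun x => \sum_(n <oo | n \in [set: nat])
   oapp (fun i => h i x) 0 (@pickle_inv I n)).
  apply: ge0_emeasurable_sum.
  - by move=> n x Dx _; case: pickle_inv => [i|] //=; exact: h0.
  - by move=> n _; case: pickle_inv => [i|] //=; exact: measurable_cst.
apply: eq_measurable_fun ms => x xD.
rewrite esum_pickle; last by move=> i; apply: h0; rewrite inE in xD.
by rewrite eseries_mkcond; apply: eq_eseriesr => n _; rewrite in_setT.
Qed.

End esumint.

Lemma real_conv (R : realType) (x y m : R) (a : nat -> R) :
  a @ \oo --> 0%R -> (0 <= m)%R ->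
  (forall n, (0 < n)%N -> (x <= y + `|a n| * m)%R /\ (y <= x + `|a n| * m)%R) ->
  x = y.
Proof.
move=> a0 m0 h.
apply/eqP; rewrite -subr_eq0 -normr_eq0; apply/eqP; apply: le_anti.
rewrite normr_ge0 andbT; rewrite leNgt; apply/negP => dp.
have ep : (0 < `|x - y| / (m + 1))%R by rewrite divr_gt0 // ltr_wpDl.
have := cvgr0_norm_lt a a0 _ ep; case=> N _ HN.
have := HN N.+1 (leqnSn N); rewrite /= ltr_pdivlMr ?ltr_wpDl // => hlt.
have [h1 h2] := h N.+1 isT.
have : (`|x - y| <= `|a N.+1| * m)%R.
  by rewrite ler_norml; apply/andP; split; lra.
move: hlt; rewrite mulrDr mulr1 => hlt hle.
have : (0 <= `|a N.+1|)%R by [].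
lra.
Qed.

Section p3.
Context (R : realType) (d : measure_display) (T : measurableType d)
  (P : R.-pker T ~> T) (cem : T) (hcem : measurable [set cem])
  (nu : probability T R) (th0 : R) (th0p : (0 < th0)%R)
  (hmu : forall n, muS1 P cem nu n = (th0 ^+ n)%:E)
  (hth : theta0S P cem = th0%:E) (hqsd : isQSD P cem nu)
  (W : T -> R) (I : countType) (nuS : I -> probability T R)
  (eta : I -> T -> R) (alpha : nat -> R)
  (hA : AssumptionA P cem W nuS eta alpha)
  (hW : \int[nu]_(x in Dom cem) (W x)%:E < +oo).

Lemma KA (A : set T) (mA : measurable A) (AD : A `<=` Dom cem) :
  nu A = \esum_(i in [set: I]) (\int[nu]_(x in Dom cem) (eta i x)%:E) * nuS i A.
Proof.
case: hA => _ [hj [[mW W1] [hnuS [heta [_ [halpha hmain]]]]]].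
have mD := mDom hcem.
have [N [mN N0 sN]] := part2 hcem th0p hmu hth.
set D' := Dom cem `\` N.
have mD' : measurable D' by exact: measurableD.
have j0 : forall x, D' x -> jS_pt P cem x = 0.
  move=> x [Dx Nx]; have [k hk] := hj x Dx; case: k hk => [|k] hk.
    by rewrite hk.
  by exfalso; apply: Nx; apply: sN; split => //; rewrite hk lte_fin ltr0Sn.
set c := fun i => fine (nuS i A).
have cE : forall i, nuS i A = (c i)%:E.
  by move=> i; rewrite /c fineK // fin_num_measure.
have c0 : forall i, (0 <= c i)%R by move=> i; rewrite -lee_fin -cE.
set g := fun x => \esum_(i in [set: I]) (eta i x)%:E * (c i)%:E.
set s := fun n x => Spos P cem n (fun y => (\1_A y)%:E) x.
have ind01 : forall y, 0 <= ((\1_A y : R)%:E) <= 1.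
  by move=> y; rewrite !lee_fin indicE; case: (y \in A) => /=; rewrite ?lexx ?ler01.
have mind : measurable_fun [set: T] (fun y => (\1_A y : R)%:E).
  by apply/measurable_EFinP; exact: measurable_indic.
have s0 : forall n x, 0 <= s n x.
  by move=> n x; apply: Spos_ge0 => y; case/andP: (ind01 y).
have s1 : forall n x, s n x <= 1 by move=> n x; exact: Spos_le1.
have ms : forall n, measurable_fun [set: T] (s n).
  by move=> n; apply: Spos_meas => // y; case/andP: (ind01 y).
have meta : forall i, measurable_fun (Dom cem) (fun x => (eta i x)%:E).
  by move=> i; case: (heta i) => mi _ _ _; apply/measurable_EFinP.
have eta0 : forall i x, Dom cem x -> (0 <= eta i x)%R.
  by move=> i x Dx; case: (heta i) => _ e0 _ _; exact: e0.
have mgi : forall i, measurable_fun (Dom cem) (fun x => (eta i x)%:E * (c i)%:E).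
  move=> i; rewrite (_ : (fun x => _) = (fun x => (c i)%:E * (eta i x)%:E)).
    exact: measurable_funeM.
  by apply/funext => x; rewrite muleC.
have gi0 : forall i x, Dom cem x -> 0 <= (eta i x)%:E * (c i)%:E.
  by move=> i x Dx; rewrite -EFinM lee_fin mulr_ge0 //; exact: eta0.
have mg : measurable_fun (Dom cem) g by exact: esum_meas.
have g0 : forall x, Dom cem x -> 0 <= g x.
  by move=> x Dx; apply: esum_ge0 => i _; exact: gi0.
have pw : forall n x, (0 < n)%N -> D' x ->
    g x <= (th0 ^- n)%:E * s n x + (`|alpha n| * W x)%:E /\
    (th0 ^- n)%:E * s n x <= g x + (`|alpha n| * W x)%:E.
  move=> n x n0 D'x; have [Dx Nx] := D'x.
  have mf : measurable_fun (Dom cem) (\1_A : T -> R) by exact: measurable_indic.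
  have ind1 : forall y, (`|\1_A y : R| <= 1)%R.
    by move=> y; rewrite indicE; case: (y \in A); rewrite ?normr1 ?normr0.
  have Wp : forall y, Dom cem y -> (0 < W y)%R.
    by move=> y Dy; exact: lt_le_trans ltr01 (W1 y Dy).
  have lf : inLinf cem W (\1_A : T -> R).
    by exists 1%R => y Dy; rewrite mul1r; apply: le_trans (W1 y Dy).
  have := hmain _ mf lf n x n0 Dx.
  rewrite hth j0 //= oppr0 powRr0 mulr1.
  have -> : Ssg P cem n (\1_A) x = s n x.
    rewrite /Ssg.
    have -> : (fun y => (Num.max (\1_A y) 0%R)%:E) = (fun y => (\1_A y : R)%:E).
      by apply/funext => y; rewrite max_l.
    have -> : (fun y => (Num.max (- \1_A y) 0%R)%:E) = (fun y => 0 : \bar R).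
      by apply/funext => y; rewrite max_r // oppr_le0.
    by rewrite Spos0 sube0.
  have e1 : forall i, (eta i x)%:E * \int[nuS i]_(y in Dom cem) (\1_A y : R)%:E
      = (eta i x)%:E * (c i)%:E.
    by move=> i; rewrite integral_indic // setIidl // /c fineK // fin_num_measure.
  have -> : sumI (fun i => (eta i x)%:E * \int[nuS i]_(y in Dom cem) (\1_A y : R)%:E)
      = g x.
    rewrite /sumI /=.
    rewrite [X in X - _](_ : _ = g x); last first.
      by apply: eq_esum => i _; rewrite e1 max_l // gi0.
    rewrite [X in _ - X](_ : _ = 0); last first.
      by apply: esum1 => i _; rewrite e1 max_r // oppe_le0 gi0.
    by rewrite sube0.
  have hn : (alpha n * W x)%:E * normW cem W \1_A <= (`|alpha n| * W x)%:E.
    have nle1 : normW cem W \1_A <= 1.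
      apply: ge_ereal_sup => _ [y Dy <-]; rewrite lee_fin ler_pdivrMr ?Wp //.
      by rewrite mul1r; apply: le_trans (W1 y Dy).
    have nge0 : 0 <= normW cem W \1_A.
      have : (`|\1_A x : R| / W x)%:E <= normW cem W \1_A.
        by apply: ereal_sup_ubound; exists x.
      by apply: le_trans; rewrite lee_fin divr_ge0 // ltW // Wp.
    have mE : normW cem W \1_A = (fine (normW cem W \1_A))%:E.
      by rewrite fineK // ge0_fin_numE // (le_lt_trans nle1 (ltry _)).
    move: nle1 nge0; rewrite mE -EFinM !lee_fin => m1 m0.
    apply: le_trans (ler_wpM2r m0 (ler_norm _)) _.
    rewrite normrM (ger0_norm (ltW (Wp x Dx))); apply: ler_piMr => //.
    by rewrite mulr_ge0 // ltW // Wp.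
  move=> h; have {h hn} h := le_trans h hn.
  have sE : s n x = (fine (s n x))%:E.
    by rewrite fineK // ge0_fin_numE // (le_lt_trans (s1 n x) (ltry _)).
  move: h; rewrite sE.
  case E : (g x) => [rg||].
  - rewrite -EFinM -EFinB /= lee_fin ler_norml => /andP[h1 h2].
    by rewrite -!EFinD !lee_fin; split; lra.
  - by rewrite -EFinM /= leye_eq.
  - by have := g0 x Dx; rewrite E.
have mW' : measurable_fun (Dom cem) (fun x => (W x)%:E) by apply/measurable_EFinP.
have W0 : forall x, Dom cem x -> 0 <= (W x)%:E.
  by move=> x Dx; rewrite lee_fin (le_trans ler01 (W1 x Dx)).
set M := \int[nu]_(x in Dom cem) (W x)%:E.
have D'D : D' `<=` Dom cem by move=> x [].
have th0n0 : forall n, (0 <= th0 ^- n)%R.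
  by move=> n; rewrite invr_ge0 exprn_ge0 // ltW.
have ms' : forall n, measurable_fun (Dom cem) (fun x => (th0 ^- n)%:E * s n x).
  by move=> n; apply: measurable_funeM; exact: measurable_funS (ms n).
have a0 : forall n x, 0 <= (th0 ^- n)%:E * s n x.
  by move=> n x; rewrite mule_ge0 // lee_fin.
have intA : forall n, \int[nu]_(x in D') ((th0 ^- n)%:E * s n x) = nu A.
  move=> n; rewrite -(ge0_negligible_integral mN mD (ms' n) _ N0); last first.
    by move=> x _; exact: a0.
  rewrite ge0_integralZl_EFin //.
  all: try (by move=> x _; exact: s0).
  all: try (exact: measurable_funS (ms n)).
  rewrite (_ : \int[nu]_(x in Dom cem) s n x = nu A * muS1 P cem nu n); last first.
    by case: hqsd => _ hq; exact: (hq n A mA AD).2.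
  rewrite hmu muleCA -EFinM mulVf ?mule1 //.
  by rewrite expf_neq0 // gt_eqF.
have intW : \int[nu]_(x in D') (W x)%:E = M.
  by rewrite /M (ge0_negligible_integral mN mD mW' W0 N0).
have intg : \int[nu]_(x in D') g x = \int[nu]_(x in Dom cem) g x.
  by rewrite (ge0_negligible_integral mN mD mg g0 N0).
have mgD' : measurable_fun D' g := measurable_funS mD D'D mg.
have mWD' : measurable_fun D' (fun x => (W x)%:E) := measurable_funS mD D'D mW'.
have mEn : forall n, measurable_fun D' (fun x => (`|alpha n| * W x)%:E).
  move=> n; apply/measurable_EFinP; apply: measurable_funM.
    exact: measurable_cst.
  exact: measurable_funS mW.
have En0 : forall n x, D' x -> 0 <= (`|alpha n| * W x)%:E.
  by move=> n x [Dx _]; rewrite EFinM mule_ge0 // W0.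
have intE : forall n, \int[nu]_(x in D') (`|alpha n| * W x)%:E = (`|alpha n|)%:E * M.
  move=> n; under eq_integral do rewrite EFinM.
  rewrite ge0_integralZl_EFin // ?intW //.
  by move=> x [Dx _]; exact: W0.
set G := \int[nu]_(x in Dom cem) g x.
have bounds : forall n, (0 < n)%N ->
    G <= nu A + (`|alpha n|)%:E * M /\ nu A <= G + (`|alpha n|)%:E * M.
  move=> n n0; split.
  - rewrite /G -intg -(intA n) -intE -ge0_integralD //.
    all: try (by move=> x _; exact: a0).
    all: try (exact: measurable_funS (ms' n)).
    apply: ge0_le_integral => //.
    all: try (by move=> x [Dx _]; exact: g0).
    all: try (by apply: emeasurable_funD => //; exact: measurable_funS (ms' n)).
    all: try (by move=> x; exact: En0).
    by move=> x D'x; exact: (pw n x n0 D'x).1.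
  - rewrite /G -intg -{1}(intA n) -intE -ge0_integralD //.
    all: try (by move=> x [Dx _]; exact: g0).
    apply: ge0_le_integral => //.
    all: try (by move=> x _; exact: a0).
    all: try (exact: measurable_funS (ms' n)).
    all: try (by apply: emeasurable_funD => //).
    all: try (by move=> x; exact: En0).
    by move=> x D'x; exact: (pw n x n0 D'x).2.
have M0 : 0 <= M by apply: integral_ge0.
have ME : M = (fine M)%:E by rewrite fineK // ge0_fin_numE.
have AE : nu A = (fine (nu A))%:E by rewrite fineK // fin_num_measure.
have G0 : 0 <= G by apply: integral_ge0.
have GE : G = (fine G)%:E.
  rewrite fineK // ge0_fin_numE //.
  have [h _] := bounds 1%N isT.
  by apply: le_lt_trans h _; rewrite AE ME -EFinM -EFinD ltry.
have : fine G = fine (nu A).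
  apply: (real_conv halpha (m := fine M)).
    by rewrite -lee_fin -ME.
  move=> n n0; have [h1 h2] := bounds n n0.
  move: h1 h2; rewrite GE AE ME -EFinM -!EFinD !lee_fin.
  by move=> h1 h2; split.
move=> eq; rewrite AE -eq -GE /G.
rewrite integral_esum //.
apply: eq_esum => i _; rewrite ge0_integralZr // ?cE //.
  by move=> x Dx; rewrite lee_fin; exact: eta0.
by rewrite lee_fin.
Qed.


End p3.

Lemma Dom_prob (R : realType) (d : measure_display) (T : measurableType d)
  (cem : T) (hcem : measurable [set cem]) (mu : probability T R) :
  mu [set cem] = 0 -> mu (Dom cem) = 1.
Proof.
move=> h0; rewrite (_ : Dom cem = ~` [set cem]) //.
by rewrite probability_setC // h0 sube0.
Qed.

Unset Implicit Arguments.
Set Strict Implicit.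

Theorem proposition2p3 (R : realType) (d : measure_display) (T : measurableType d)
  (P : R.-pker T ~> T) (cem : T)
  (hcem : measurable [set cem]) (habs : P cem [set cem] = 1)
  (nu : probability T R) (th0 : R)
  (hqsd : isQSD P cem nu) (hpar : exp_param P cem nu th0)
  (hth0 : theta0S P cem = th0%:E) :
  (jS_mu P cem nu = 0 /\
   nu.-negligible [set x | Dom cem x /\ 0 < jS_pt P cem x]) /\
  (forall (W : T -> R) (I : countType) (nuS : I -> probability T R)
          (eta : I -> T -> R) (alpha : nat -> R),
     AssumptionA P cem W nuS eta alpha ->
     \int[nu]_(x in Dom cem) (W x)%:E < +oo ->
     \int[nu]_(x in Dom cem) etaS eta x = 1 /\
     (forall A : set T, measurable A -> A `<=` Dom cem ->
        nu A = \esum_(i in [set: I])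
                 (\int[nu]_(x in Dom cem) (eta i x)%:E) * nuS i A)).
Proof.
have [/andP[th0p _] hmu] := hpar.
split.
  split; last exact: (@part2 _ _ _ P cem hcem nu th0 th0p hmu hth0).
  rewrite /jS_mu (_ : muS1 P cem nu = fun n => (th0 ^+ n)%:E).
    exact: j_seq_geom.
  by apply/funext => n; exact: hmu.
move=> W I nuS eta alpha hA hW.
have K := KA hcem th0p hmu hth0 hqsd hA hW.
split; last exact: K.
have mD := mDom hcem.
have hA' := hA.
case: hA' => _ [_ [_ [hnuS [heta _]]]].
rewrite /etaS integral_esum //; first last.
- by move=> i x Dx; rewrite lee_fin; case: (heta i) => _ e0 _ _; exact: e0.
- by move=> i; case: (heta i) => mi _ _ _; apply/measurable_EFinP.
have := K _ mD (@subset_refl _ _).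
rewrite Dom_prob //; last by case: hqsd.
move=> ->; apply: eq_esum => i _.
by rewrite Dom_prob ?mule1 //; case: (hnuS i).
Qed.
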